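(* Assume the standing assumptions (a)–(d) below, and let $T\in(0,\infty)$, $\epsilon\in[0,\infty)$ satisfy $(L+2\epsilon\tilde L)T^2\le 1/4$ and $\epsilon\tilde L\le K/3$. Let $\bar\mu,\bar\mu'$ be probability measures on $\mathbb{R}^d$ and $\bar x,\bar x',\bar v,\bar v'\in\mathbb{R}^d$; let $(\bar x_t,\bar v_t)=(\bar q_t,\bar p_t)(\bar x,\bar v,\bar\mu)$ and $(\bar x'_t,\bar v'_t)=(\bar q_t,\bar p_t)(\bar x',\bar v',\bar\mu')$ be solutions of the distribution-dependent Hamiltonian dynamics. If $\bar v=\bar v'$, then for every family $(\kappa_s)_{0\le s\le T}$ where $\kappa_s$ is a coupling of $\bar\mu_s$ and $\bar\mu'_s$, $$|\bar x_T-\bar x'_T|^2\le\big(1-\tfrac5{12}KT^2\big)|\bar x-\bar x'|^2+\epsilon^2\tilde L^2T^4\Big(\frac76+\frac{3}{2KT^2}\Big)\max_{s\le T}\Big(\int|y-y'|\kappa_s(\mathrm{d}y\,\mathrm{d}y')\Big)^2+\hat CT^2,$$ where $\hat C=(2L+K)\mathcal R^2$.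
   Context: Standing assumptions: $V:\mathbb{R}^d\to\mathbb{R}$, $W:\mathbb{R}^d\times\mathbb{R}^d\to\mathbb{R}$ are $C^1$, $\nabla_1W$ the gradient in the first argument, constants $L>0,K>0,\mathcal R\ge0,\tilde L\ge0$ with: (a) $V(0)=0$, $V\ge0$; (b) $|\nabla V(x)-\nabla V(y)|\le L|x-y|$; (c) $\langle x-y,\nabla V(x)-\nabla V(y)\rangle\ge K|x-y|^2+L^{-1}|\nabla V(x)-\nabla V(y)|^2$ whenever $|x-y|\ge\mathcal R$; (d) $W$ symmetric, $|\nabla_1W(x,y)-\nabla_1W(\tilde x,\tilde y)|\le\tilde L(|x-\tilde x|+|y-\tilde y|)$. Distribution-dependent Hamiltonian dynamics: for $(x,v)\in\mathbb{R}^{2d}$ and a probability measure $\nu$, $(\bar q_t,\bar p_t)(x,v,\nu)$ solves $\dot{\bar q}_t=\bar p_t$, $\dot{\bar p}_t=-\nabla V(\bar q_t)-\epsilon\int\nabla_1W(\bar q_t,u)\nu_t(\mathrm{d}u)$, $(\bar q_0,\bar p_0)=(x,v)$, where $\nu_t=\mathrm{Law}(\bar q_t(\tilde x,\tilde v,\nu))$, $(\tilde x,\tilde v)\sim\nu\otimes\mathcal N(0,I_d)$. Thus $\bar\mu_s,\bar\mu'_s$ are these time-$s$ laws for $\nu=\bar\mu,\bar\mu'$. *)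

(* Defs.v *)
(* R^d is represented by [d.-tuple R], which carries
   the product (= Borel) sigma-algebra of MathComp-Analysis. *)
From HB Require Import structures.
From mathcomp Require Import all_boot all_order all_algebra.
From mathcomp Require Import all_classical all_reals all_analysis.
Set Implicit Arguments. Unset Strict Implicit. Unset Printing Implicit Defensive.
Import Order.TTheory GRing.Theory Num.Theory.
Import numFieldNormedType.Exports.
Local Open Scope classical_set_scope.
Local Open Scope ring_scope.

Section Vec.
Context {R : realType} {d : nat}.
Notation vec := (d.-tuple R).

Definition vzero : vec := [tuple (0 : R) | i < d].
Definition vadd (x y : vec) : vec := [tuple tnth x i + tnth y i | i < d].
Definition vsub (x y : vec) : vec := [tuple tnth x i - tnth y i | i < d].
Definition vscale (a : R) (x : vec) : vec := [tuple a * tnth x i | i < d].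
Definition vdot (x y : vec) : R := \sum_(i < d) tnth x i * tnth y i.
Definition vnorm (x : vec) : R := Num.sqrt (vdot x x).

(* G is the gradient of the C^1 function F : R^d -> R
   (directional derivatives given by <G x, h>; continuity of G is
    imposed separately, here it follows from the Lipschitz assumptions). *)
Definition is_gradient (F : vec -> R) (G : vec -> vec) : Prop :=
  forall x h : vec, is_derive (0 : R) (1 : R) (fun t => F (vadd x (vscale t h))) (vdot (G x) h).

Definition is_gradient1 (W : vec -> vec -> R) (G1 : vec -> vec -> vec) : Prop :=
  forall y, is_gradient (fun x => W x y) (fun x => G1 x y).

Definition std_gaussian (g : probability vec R) : Prop :=
  forall A : 'I_d -> set R, (forall i, measurable (A i)) ->
    g [set x : vec | forall i, A i (tnth x i)] = (\prod_(i < d) normal_prob 0 1 (A i))%E.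

Definition interaction (G1 : vec -> vec -> vec) (nu : probability vec R) (q : vec) : vec :=
  [tuple Rintegral nu setT (fun u => tnth (G1 q u) i) | i < d].

(* (Q, P) : [0,oo) -> R^d x R^d solves
      dQ/dt = P,  dP/dt = - gradV(Q) - eps \int G1(Q,u) nu_t(du),  (Q,P)(0) = (x,v)
   (componentwise derivatives for t > 0, right-continuity at 0; the interaction
   integrand is required to be integrable so that the ODE makes sense). *)
Definition solves_ham (gradV : vec -> vec) (G1 : vec -> vec -> vec) (eps : R)
    (nut : R -> probability vec R) (x v : vec) (Q P : R -> vec) : Prop :=
  Q 0 = x /\ P 0 = v /\
  (forall i, tnth (Q t) i @[t --> 0^'+] --> tnth x i) /\
  (forall i, tnth (P t) i @[t --> 0^'+] --> tnth v i) /\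
  (forall t : R, 0 <= t -> forall i,
      (nut t).-integrable setT (fun u => (tnth (G1 (Q t) u) i)%:E)) /\
  (forall t : R, 0 < t -> forall i,
      is_derive t (1 : R) (fun s => tnth (Q s) i) (tnth (P t) i) /\
      is_derive t (1 : R) (fun s => tnth (P s) i)
        (- tnth (gradV (Q t)) i - eps * tnth (interaction G1 (nut t) (Q t)) i)).

(* The distribution-dependent Hamiltonian dynamics started from nu:
   Qf x v t, Pf x v t = (qbar_t, pbar_t)(x, v, nu), and nut t = nu_t is the law of
   qbar_t(x~, v~, nu) for (x~, v~) ~ nu (x) gamma, gamma = N(0, I_d). *)
Definition dd_hamiltonian (gradV : vec -> vec) (G1 : vec -> vec -> vec) (eps : R)
    (gamma : probability vec R) (nu : probability vec R)
    (Qf Pf : vec -> vec -> R -> vec) (nut : R -> probability vec R) : Prop :=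
  (forall x v, solves_ham gradV G1 eps nut x v (Qf x v) (Pf x v)) /\
  (forall t : R, 0 <= t -> forall A : set vec, measurable A ->
     nut t A = (nu \x gamma)%E [set z : vec * vec | A (Qf z.1 z.2 t)]).

Definition is_coupling (kappa : probability (vec * vec)%type R) (mu mu' : probability vec R) : Prop :=
  forall A : set vec, measurable A ->
    kappa (A `*` setT) = mu A /\ kappa (setT `*` A) = mu' A.

(* sup_{0 <= s <= T} \int |y - y'| kappa_s(dy dy')  (extended real; the paper's max) *)
Definition sup_coupling_cost (kappa : R -> probability (vec * vec)%type R) (T : R) : \bar R :=
  ereal_sup [set (\int[kappa s]_z (vnorm (vsub z.1 z.2))%:E)%E | s in `[0, T]].

End Vec.

(* Main.v *)
Require Import Defs.
From HB Require Import structures.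
From mathcomp Require Import all_boot all_order all_algebra.
From mathcomp Require Import all_classical all_reals all_analysis.
From mathcomp Require Import ring lra.
From mathcomp Require Import measurable_realfun.
Set Implicit Arguments. Unset Strict Implicit. Unset Printing Implicit Defensive.
Import Order.TTheory GRing.Theory Num.Theory.
Import numFieldNormedType.Exports.
Local Open Scope classical_set_scope.
Local Open Scope ring_scope.

Ltac eqle := rewrite le_eqVlt; apply/orP; left; apply/eqP; (ring || (field; lra)).

Section Core.
Variable R : realType.

Lemma amgm (c x y : R) : 0 < c -> x * y <= c * x ^+ 2 + y ^+ 2 / (4 * c).
Proof.
move=> c0.
have h : 0 <= (2 * c * x - y) ^+ 2 / (4 * c).
  by apply: divr_ge0; [exact: sqr_ge0| lra].
rewrite -subr_ge0.
suff -> : c * x ^+ 2 + y ^+ 2 / (4 * c) - x * y = (2 * c * x - y) ^+ 2 / (4 * c) by [].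
by field; lra.
Qed.

Lemma c_S1 (L mu s nw ng b : R) : 0 < L -> 0 <= s -> 0 <= mu * s ^+ 2 -> mu * s ^+ 2 <= 2 ->
  0 <= nw -> 0 <= ng -> - b <= nw * ng ->
  (s + mu * s ^+ 3) * (- b) <= ng ^+ 2 / L + 9 / 4 * L * (s * nw) ^+ 2.
Proof.
move=> L0 s0 smu0 smu nw0 ng0 hb.
have e1 : s + mu * s ^+ 3 = (1 + mu * s ^+ 2) * s by ring.
have nu0 : 0 <= s + mu * s ^+ 3 by rewrite e1; apply: mulr_ge0 => //; rewrite addr_ge0.
have h1 : (s + mu * s ^+ 3) * (- b) <= (1 + mu * s ^+ 2) * (s * nw) * ng.
  have := ler_wpM2l nu0 hb; rewrite e1.
  by move=> H; apply: (le_trans H); eqle.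
apply: (le_trans h1).
have L4 : 0 < L / 4 by rewrite divr_gt0.
have := amgm ((1 + mu * s ^+ 2) * (s * nw)) ng L4.
have e2 : ng ^+ 2 / (4 * (L / 4)) = ng ^+ 2 / L by congr (_ / _); field.
rewrite e2 => H; apply: (le_trans H).
have h9 : (1 + mu * s ^+ 2) ^+ 2 <= 9 by nra.
have h9' : (1 + mu * s ^+ 2) ^+ 2 * (s * nw) ^+ 2 <= 9 * (s * nw) ^+ 2.
  by apply: ler_wpM2r => //; exact: sqr_ge0.
have := ler_wpM2l (ltW L4) h9'.
rewrite -exprMn. lra.
Qed.

Lemma c_S3 (p nz ne be Mr : R) : 0 <= nz -> - p <= nz * ne -> ne <= be * (nz + Mr) ->
  - p <= be * nz ^+ 2 + be * nz * Mr.
Proof.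
move=> nz0 hp hne; apply: (le_trans hp).
have := ler_wpM2l nz0 hne; move=> H; apply: (le_trans H); eqle.
Qed.

Lemma c_S4 (K be nz Mr : R) : 0 < K ->
  be * nz * Mr <= K / 6 * nz ^+ 2 + 3 / (2 * K) * (be ^+ 2 * Mr ^+ 2).
Proof.
move=> K0.
have K6 : 0 < K / 6 by rewrite divr_gt0.
have := amgm nz (be * Mr) K6.
have -> : (be * Mr) ^+ 2 / (4 * (K / 6)) = 3 / (2 * K) * (be ^+ 2 * Mr ^+ 2).
  by field; rewrite gt_eqF.
by move=> H; apply: le_trans H; eqle.
Qed.

Lemma c_S5a (T mu s nw be nz : R) : 0 < T -> 0 <= mu * s ^+ 2 -> mu * s ^+ 2 <= 2 ->
  0 <= s -> 0 <= nw -> 0 <= be -> 0 <= nz ->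
  (1 + mu * s ^+ 2) * (s * nw) * (be * nz) <=
    (s * nw) ^+ 2 / (2 * T ^+ 2) + 9 / 2 * (be ^+ 2 * T ^+ 2) * nz ^+ 2.
Proof.
move=> T0 smu0 smu s0 nw0 be0 nz0.
have T2 : T ^+ 2 != 0 by rewrite expf_neq0 // gt_eqF.
have c0 : 0 < 1 / (2 * T ^+ 2) by rewrite divr_gt0 // mulr_gt0 // exprn_gt0.
have := amgm (s * nw) (3 * be * nz) c0.
have -> : (3 * be * nz) ^+ 2 / (4 * (1 / (2 * T ^+ 2))) = 9 / 2 * (be ^+ 2 * T ^+ 2) * nz ^+ 2.
  by field; lra.
have -> : 1 / (2 * T ^+ 2) * (s * nw) ^+ 2 = (s * nw) ^+ 2 / (2 * T ^+ 2) by field; lra.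
move=> H; apply: le_trans H.
have h0 : 0 <= (s * nw) * (be * nz) by apply: mulr_ge0 => //; apply: mulr_ge0.
have h3 : (1 + mu * s ^+ 2) <= 3 by lra.
have := ler_wpM2r h0 h3.
have -> : 3 * ((s * nw) * (be * nz)) = s * nw * (3 * be * nz) by ring.
by move=> H; apply: le_trans H; eqle.
Qed.

Lemma c_S5b (T mu s nw be Mr : R) : 0 < T -> 0 <= mu * s ^+ 2 -> mu * s ^+ 2 <= 2 ->
  (1 + mu * s ^+ 2) * (s * nw) * (be * Mr) <=
    2 * (s * nw) ^+ 2 / T ^+ 2 + 7 / 6 * T ^+ 2 * (be ^+ 2 * Mr ^+ 2).
Proof.
move=> T0 smu0 smu.
have T2 : T ^+ 2 != 0 by rewrite expf_neq0 // gt_eqF.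
have T2p : 0 < T ^+ 2 by rewrite exprn_gt0.
have c1 : 0 < 1 / (2 * T ^+ 2) by rewrite divr_gt0 // mulr_gt0.
have c2 : 0 < 3 / (2 * T ^+ 2) by rewrite divr_gt0 // mulr_gt0.
have B1 := amgm (s * nw) (be * Mr) c1.
have B2 := amgm (s * nw) (mu * s ^+ 2 * (be * Mr)) c2.
have e3 : (be * Mr) ^+ 2 / (4 * (1 / (2 * T ^+ 2))) = T ^+ 2 / 2 * (be ^+ 2 * Mr ^+ 2).
  by field; lra.
have e4 : (mu * s ^+ 2 * (be * Mr)) ^+ 2 / (4 * (3 / (2 * T ^+ 2))) =
   (mu * s ^+ 2) ^+ 2 * (T ^+ 2 / 6 * (be ^+ 2 * Mr ^+ 2)).
  by field; lra.
rewrite e3 in B1; rewrite e4 in B2.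
have p0 : 0 <= T ^+ 2 / 6 * (be ^+ 2 * Mr ^+ 2).
  by apply: mulr_ge0; [apply: divr_ge0; [exact: ltW|] | apply: mulr_ge0; exact: sqr_ge0].
have h4 : (mu * s ^+ 2) ^+ 2 * (T ^+ 2 / 6 * (be ^+ 2 * Mr ^+ 2)) <=
    4 * (T ^+ 2 / 6 * (be ^+ 2 * Mr ^+ 2)).
  apply: ler_wpM2r => //.
  have -> : 4 = 2 ^+ 2 :> R by rewrite expr2; lra.
  by rewrite ler_pXn2r // ?nnegrE.
have e5 : 1 / (2 * T ^+ 2) * (s * nw) ^+ 2 + 3 / (2 * T ^+ 2) * (s * nw) ^+ 2 =
   2 * (s * nw) ^+ 2 / T ^+ 2 by field; lra.
have e6 : (1 + mu * s ^+ 2) * (s * nw) * (be * Mr) =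
   s * nw * (be * Mr) + s * nw * (mu * s ^+ 2 * (be * Mr)) by ring.
rewrite e6. lra.
Qed.

Lemma c_S5 (mu s nw ne be nz Mr q : R) : 0 <= s -> 0 <= mu * s ^+ 2 -> 0 <= nw ->
  - q <= nw * ne -> ne <= be * (nz + Mr) ->
  (s + mu * s ^+ 3) * (- q) <=
    (1 + mu * s ^+ 2) * (s * nw) * (be * nz) + (1 + mu * s ^+ 2) * (s * nw) * (be * Mr).
Proof.
move=> s0 smu0 nw0 hq hne.
have e1 : s + mu * s ^+ 3 = (1 + mu * s ^+ 2) * s by ring.
have nu0 : 0 <= s + mu * s ^+ 3 by rewrite e1; apply: mulr_ge0 => //; rewrite addr_ge0.
have := ler_wpM2l nu0 hq; move=> H; apply: (le_trans H).
have nwne : nw * ne <= nw * (be * (nz + Mr)) by apply: ler_wpM2l.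
have := ler_wpM2l nu0 nwne; move=> H2; apply: (le_trans H2).
rewrite e1; eqle.
Qed.

Lemma c_S6 (K s c nz nw : R) : 0 < K -> 0 <= s -> c <= nz * nw ->
  11 / 25 * K * (2 * s * c) <= 11 / 25 * K * (nz ^+ 2 / 16 + 16 * (s * nw) ^+ 2).
Proof.
move=> K0 s0 hc.
apply: ler_wpM2l; first by rewrite mulr_ge0 // ltW.
have sc : 2 * s * c <= 2 * s * (nz * nw) by apply: ler_wpM2l => //; rewrite mulr_ge0.
apply: (le_trans sc).
have c0 : 0 < 1 / 32 :> R by [].
have := amgm nz (s * nw) c0.
have -> : (s * nw) ^+ 2 / (4 * (1 / 32)) = 8 * (s * nw) ^+ 2 by field; lra.
move=> H.
have -> : 2 * s * (nz * nw) = 2 * (nz * (s * nw)) by ring.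
lra.
Qed.

Lemma c_S7 (K mu s nw : R) : 0 < K -> mu * s ^+ 2 <= 2 ->
  11 / 25 * K * (mu * s ^+ 4 * nw ^+ 2) <= 11 / 25 * K * (2 * (s * nw) ^+ 2).
Proof.
move=> K0 smu.
apply: ler_wpM2l; first by rewrite mulr_ge0 // ltW.
have -> : mu * s ^+ 4 * nw ^+ 2 = (mu * s ^+ 2) * (s * nw) ^+ 2 by ring.
by apply: ler_wpM2r => //; exact: sqr_ge0.
Qed.

Lemma c_S8 (mu T s nw : R) : 0 < T -> mu * T ^+ 2 = 2 ->
  mu * s ^+ 2 * nw ^+ 2 = 2 * (s * nw) ^+ 2 / T ^+ 2.
Proof.
move=> T0 hmu.
have T2 : T ^+ 2 != 0 by rewrite expf_neq0 // gt_eqF.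
have -> : mu = 2 / T ^+ 2 by rewrite -hmu; field; lra.
by field; lra.
Qed.

Lemma c_Cz (K be T nz : R) : 0 < K -> be <= K / 3 -> be ^+ 2 * T ^+ 2 <= K / 144 ->
  (be + 9 / 2 * (be ^+ 2 * T ^+ 2) - K + K / 6 + 11 / 25 * K * (17 / 16)) * nz ^+ 2 <= 0.
Proof.
move=> K0 h1 h2; apply: mulr_le0_ge0; last exact: sqr_ge0.
lra.
Qed.

Lemma c_Cw (K L T s nw : R) : 0 < T -> (9 / 4 * L + 209 / 25 * K) * T ^+ 2 <= 3 / 2 ->
  (9 / 4 * L + 1 / (2 * T ^+ 2) + 2 / T ^+ 2 - 4 / T ^+ 2 + 209 / 25 * K) * (s * nw) ^+ 2 <= 0.
Proof.
move=> T0 H.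
have T2 : T ^+ 2 != 0 by rewrite expf_neq0 // gt_eqF.
apply: mulr_le0_ge0; last exact: sqr_ge0.
have -> : 9 / 4 * L + 1 / (2 * T ^+ 2) + 2 / T ^+ 2 - 4 / T ^+ 2 + 209 / 25 * K =
   ((9 / 4 * L + 209 / 25 * K) * T ^+ 2 - 3 / 2) / T ^+ 2 by field; lra.
apply: mulr_le0_ge0; first lra.
by rewrite invr_ge0 exprn_ge0 // ltW.
Qed.

Lemma c_final (K L be T s Mr Rc nz nw ng a b p q c mu : R) :
  (s + mu * s ^+ 3) * (- b) <= ng ^+ 2 / L + 9 / 4 * L * (s * nw) ^+ 2 ->
  - p <= be * nz ^+ 2 + be * nz * Mr ->
  be * nz * Mr <= K / 6 * nz ^+ 2 + 3 / (2 * K) * (be ^+ 2 * Mr ^+ 2) ->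
  (1 + mu * s ^+ 2) * (s * nw) * (be * nz) <=
    (s * nw) ^+ 2 / (2 * T ^+ 2) + 9 / 2 * (be ^+ 2 * T ^+ 2) * nz ^+ 2 ->
  (1 + mu * s ^+ 2) * (s * nw) * (be * Mr) <=
    2 * (s * nw) ^+ 2 / T ^+ 2 + 7 / 6 * T ^+ 2 * (be ^+ 2 * Mr ^+ 2) ->
  (s + mu * s ^+ 3) * (- q) <=
    (1 + mu * s ^+ 2) * (s * nw) * (be * nz) + (1 + mu * s ^+ 2) * (s * nw) * (be * Mr) ->
  11 / 25 * K * (2 * s * c) <= 11 / 25 * K * (nz ^+ 2 / 16 + 16 * (s * nw) ^+ 2) ->
  11 / 25 * K * (mu * s ^+ 4 * nw ^+ 2) <= 11 / 25 * K * (2 * (s * nw) ^+ 2) ->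
  mu * s ^+ 2 * nw ^+ 2 = 2 * (s * nw) ^+ 2 / T ^+ 2 ->
  (be + 9 / 2 * (be ^+ 2 * T ^+ 2) - K + K / 6 + 11 / 25 * K * (17 / 16)) * nz ^+ 2 <= 0 ->
  (9 / 4 * L + 1 / (2 * T ^+ 2) + 2 / T ^+ 2 - 4 / T ^+ 2 + 209 / 25 * K) * (s * nw) ^+ 2 <= 0 ->
  - a <= - K * nz ^+ 2 - ng ^+ 2 / L + (2 * L + K) * Rc ^+ 2 ->
  (- a - p) + (s + mu * s ^+ 3) * (- b - q) - 2 * mu * s ^+ 2 * nw ^+ 2
   + 11 / 25 * K * (nz ^+ 2 + 2 * s * c + s ^+ 2 * nw ^+ 2 + mu * s ^+ 4 * nw ^+ 2)
  <= (2 * L + K) * Rc ^+ 2 + be ^+ 2 * Mr ^+ 2 * (7 * T ^+ 2 / 6 + 3 / (2 * K)).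
Proof.
move=> S1 S3 S4 S5a S5b S5 S6 S7 S8 Cz Cw ha.
have e7 : s ^+ 2 * nw ^+ 2 = (s * nw) ^+ 2 by ring.
rewrite e7.
have e8 : 2 * mu * s ^+ 2 * nw ^+ 2 = 2 * (mu * s ^+ 2 * nw ^+ 2) by ring.
rewrite e8 S8.
have e9 : (s + mu * s ^+ 3) * (- b - q) = (s + mu * s ^+ 3) * (- b) + (s + mu * s ^+ 3) * (- q) by ring.
rewrite e9.
lra.
Qed.

Lemma core_ineq (K L be T s Mr Rc nz nw ng ne a b p q c mu : R) :
  0 < K -> 0 < L -> 0 <= be -> be <= K / 3 -> (L + 2 * be) * T ^+ 2 <= 1/4 ->
  K <= L / 4 -> 0 < T -> 0 <= s -> s <= T -> 0 <= Mr -> mu * T ^+ 2 = 2 ->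
  0 <= nz -> 0 <= nw -> 0 <= ng -> 0 <= ne ->
  - b <= nw * ng -> - p <= nz * ne -> - q <= nw * ne -> c <= nz * nw ->
  ne <= be * (nz + Mr) ->
  - a <= - K * nz ^+ 2 - ng ^+ 2 / L + (2 * L + K) * Rc ^+ 2 ->
  (- a - p) + (s + mu * s ^+ 3) * (- b - q) - 2 * mu * s ^+ 2 * nw ^+ 2
   + 11 / 25 * K * (nz ^+ 2 + 2 * s * c + s ^+ 2 * nw ^+ 2 + mu * s ^+ 4 * nw ^+ 2)
  <= (2 * L + K) * Rc ^+ 2 + be ^+ 2 * Mr ^+ 2 * (7 * T ^+ 2 / 6 + 3 / (2 * K)).
Proof.
move=> K0 L0 be0 beK hT KL T0 s0 sT Mr0 hmu nz0 nw0 ng0 ne0 hb hp hq hc hne ha.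
have tau0 : 0 < T ^+ 2 by rewrite exprn_gt0.
have mu0 : 0 < mu by rewrite -(pmulr_lgt0 _ tau0) hmu.
have ss : s ^+ 2 <= T ^+ 2 by rewrite ler_pXn2r // ?nnegrE // ltW.
have smu : mu * s ^+ 2 <= 2 by rewrite -hmu ler_pM2l.
have smu0 : 0 <= mu * s ^+ 2 by apply: mulr_ge0; [exact: ltW | exact: sqr_ge0].
have LT : L * T ^+ 2 <= 1 / 4.
  apply: le_trans hT; apply: ler_wpM2r; first exact: ltW.
  by rewrite lerDl mulr_ge0.
have Ktau : K * T ^+ 2 <= 1 / 16.
  have : K * T ^+ 2 <= L / 4 * T ^+ 2 by apply: ler_wpM2r => //; exact: ltW.
  move: LT; clear; lra.
have be2 : be ^+ 2 * T ^+ 2 <= K / 144.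
  have h1 : be * T ^+ 2 <= K * T ^+ 2 / 3.
    rewrite mulrAC; apply: ler_wpM2r => //; exact: ltW.
  have h2 : be * (be * T ^+ 2) <= be * (K * T ^+ 2 / 3) by apply: ler_wpM2l.
  have h3 : be * (K * T ^+ 2 / 3) <= K / 3 * (K * T ^+ 2 / 3).
    apply: ler_wpM2r => //; apply: divr_ge0 => //; apply: mulr_ge0; [exact: ltW| exact: ltW].
  have h4 : K / 3 * (K * T ^+ 2 / 3) <= K / 3 * (1 / 16 / 3).
    apply: ler_wpM2l; first by apply: divr_ge0 => //; exact: ltW.
    by apply: ler_wpM2r.
  have -> : be ^+ 2 * T ^+ 2 = be * (be * T ^+ 2) by ring.
  move: h2 h3 h4; clear; lra.
have Cwh : (9 / 4 * L + 209 / 25 * K) * T ^+ 2 <= 3 / 2.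
  move: LT Ktau; clear; lra.
have S1 := c_S1 L0 s0 smu0 smu nw0 ng0 hb.
have S3 := c_S3 nz0 hp hne.
have S4 := c_S4 be nz Mr K0.
have S5a := c_S5a T0 smu0 smu s0 nw0 be0 nz0.
have S5b := c_S5b nw be Mr T0 smu0 smu.
have S5 := c_S5 s0 smu0 nw0 hq hne.
have S6 := c_S6 K0 s0 hc.
have S7 := c_S7 nw K0 smu.
have S8 := c_S8 s nw T0 hmu.
have Cz := c_Cz nz K0 beK be2.
have Cw := c_Cw s nw T0 Cwh.
exact: (c_final S1 S3 S4 S5a S5b S5 S6 S7 S8 Cz Cw ha).
Qed.

End Core.

Section ODE.
Variable R : realType.

Lemma rcvgM (f g : R -> R) (a b : R) : f u @[u --> 0^'+] --> a -> g u @[u --> 0^'+] --> b ->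
  (f u * g u) @[u --> 0^'+] --> a * b.
Proof. by move=> h1 h2; apply: cvgM. Qed.
Lemma rcvgD (f g : R -> R) (a b : R) : f u @[u --> 0^'+] --> a -> g u @[u --> 0^'+] --> b ->
  (f u + g u) @[u --> 0^'+] --> a + b.
Proof. by move=> h1 h2; apply: cvgD. Qed.
Lemma rcvgB (f g : R -> R) (a b : R) : f u @[u --> 0^'+] --> a -> g u @[u --> 0^'+] --> b ->
  (f u - g u) @[u --> 0^'+] --> a - b.
Proof. by move=> h1 h2; apply: cvgB. Qed.
Lemma rcvgC (a : R) : (fun _ : R => a) u @[u --> 0^'+] --> a.
Proof. exact: cvg_cst. Qed.
Arguments rcvgC : clear implicits.

Lemma sum3 (n : nat) (a b e : 'I_n -> R) (x y z : R) :
  \sum_i (x * a i + y * b i - z * e i) = x * \sum_i a i + y * \sum_i b i - z * \sum_i e i.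
Proof. by rewrite sumrB big_split /= -!mulr_sumr. Qed.
Lemma sum4 (n : nat) (a b e f : 'I_n -> R) (x y z : R) :
  \sum_i (a i + x * b i + y * e i + z * f i) = \sum_i a i + x * \sum_i b i + y * \sum_i e i + z * \sum_i f i.
Proof. by rewrite !big_split /= -!mulr_sumr. Qed.

Lemma scaleRE (a b : R) : a *: b = a * b.
Proof. by []. Qed.

Lemma cvg_sum_ord (n : nat) (F : set_system R) (FF : Filter F) (h : 'I_n -> R -> R) (l : 'I_n -> R) :
  (forall i, h i u @[u --> F] --> l i) ->
  (\sum_i h i u) @[u --> F] --> \sum_i l i.
Proof.
move=> hl.
rewrite (_ : (fun u => \sum_i h i u) = \sum_i h i); last by rewrite fct_sumE.
elim/big_ind2 : _ => //.
- exact: cvg_cst.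
- by move=> x1 x2 y1 y2 H1 H2; exact: (cvgD H1 H2).
Qed.


Lemma ode_gronwall (n : nat) (T ka mu B : R) (Z W : 'I_n -> R -> R) (F : R -> 'I_n -> R) :
  0 < T -> 0 <= ka -> 0 <= mu -> 0 <= B ->
  (forall (i : 'I_n) (t : R), 0 < t -> is_derive t 1 (Z i) (W i t)) ->
  (forall (i : 'I_n) (t : R), 0 < t -> is_derive t 1 (W i) (F t i)) ->
  (forall i : 'I_n, Z i t @[t --> 0^'+] --> Z i 0) ->
  (forall i : 'I_n, W i t @[t --> 0^'+] --> W i 0) ->
  (forall i : 'I_n, W i 0 = 0) ->
  (forall t : R, 0 < t -> t < T ->
     \sum_i Z i t * F t i + ((T - t) + mu * (T - t) ^+ 3) * \sum_i W i t * F t i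
     - 2 * mu * (T - t) ^+ 2 * \sum_i W i t ^+ 2
     + ka * (\sum_i Z i t ^+ 2 + 2 * (T - t) * \sum_i Z i t * W i t
             + (T - t) ^+ 2 * \sum_i W i t ^+ 2 + mu * (T - t) ^+ 4 * \sum_i W i t ^+ 2) <= B) ->
  (1 + ka * T ^+ 2) * \sum_i Z i T ^+ 2 <= \sum_i Z i 0 ^+ 2 + (1 + ka * T ^+ 2) * (B * T ^+ 2).
Proof.
move=> T0 ka0 mu0 B0 hZ hW cZ cW W0 hbr.
pose phi i u := (Z i u + (T - u) * W i u) ^+ 2 + mu * ((T - u) ^+ 4 * W i u ^+ 2).
pose Dphi i u := 2 * (Z i u + (T - u) * W i u) * ((T - u) * F u i)
   + mu * ((T - u) ^+ 4 * (2 * W i u * F u i) + W i u ^+ 2 * (- 4 * (T - u) ^+ 3)).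
pose E u := 1 + ka * (T ^+ 2 - (T - u) ^+ 2).
pose c := (1 + ka * T ^+ 2) * B.
pose U u := E u * (\sum_i phi i u) - c * (T ^+ 2 - (T - u) ^+ 2).
pose dU u := E u * (\sum_i Dphi i u) + (\sum_i phi i u) * (ka * (2 * (T - u)))
   - c * (2 * (T - u)).
have hs (t : R) : is_derive t 1 (fun u => T - u) (-1).
  have := is_deriveB (is_derive_cst T t 1) (is_derive_id t 1).
  by rewrite sub0r.
have hsq (t : R) : is_derive t 1 (fun u => T ^+ 2 - (T - u) ^+ 2) (2 * (T - t)).
  have h1 := is_deriveX 2 (hs t).
  have := is_deriveB (is_derive_cst (T ^+ 2) t 1) h1.
  move=> H; apply: is_derive_eq H _.
  rewrite /= expr1 !scaleRE; ring.
have dphi (i : 'I_n) (t : R) : 0 < t -> is_derive t 1 (phi i) (Dphi i t).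
  move=> t0.
  have h1 : is_derive t 1 (fun u => (T - u) * W i u) ((T - t) * F t i + W i t * (-1)).
    exact: (is_deriveM (hs t) (hW i t t0)).
  have h2 := is_deriveD (hZ i t t0) h1.
  have h3 := is_deriveX 2 h2.
  have h4 := is_deriveX 4 (hs t).
  have h5 := is_deriveX 2 (hW i t t0).
  have h6 := is_deriveM h4 h5.
  have h7 := is_deriveZ mu h6.
  have h8 := is_deriveD h3 h7.
  have h9 : is_derive t 1 (phi i) (2 * (Z i t + (T - t) * W i t) * (W i t + ((T - t) * F t i + W i t * -1)) + mu * ((T - t)^+4 * (2 * W i t * F t i) + W i t ^+ 2 * (4 * (T - t)^+3 * -1))) := h8.
  apply: is_derive_eq h9 _.
  rewrite /Dphi; ring.
have dPhi (t : R) : 0 < t -> is_derive t 1 (fun u => \sum_i phi i u) (\sum_i Dphi i t).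
  move=> t0; have := is_derive_sum (fun i => dphi i t t0).
  by rewrite fct_sumE.
have dE (t : R) : is_derive t 1 E (ka * (2 * (T - t))).
  have h1 := is_deriveZ ka (hsq t).
  have h2 := is_deriveD (is_derive_cst (1 : R) t 1) h1.
  have h3 : is_derive t 1 E (0 + ka *: (2 * (T - t))) := h2.
  by apply: is_derive_eq h3 _; rewrite add0r.
have dUt (t : R) : 0 < t -> is_derive t 1 U (dU t).
  move=> t0.
  have h1 := is_deriveM (dE t) (dPhi t t0).
  have h2 := is_deriveZ c (hsq t).
  have h3 := is_deriveB h1 h2.
  have h4 : is_derive t 1 U (E t *: \sum_i Dphi i t + (\sum_i phi i t) *: (ka * (2 * (T - t)))
     - c *: (2 * (T - t))) := h3.
  by apply: is_derive_eq h4 _; rewrite /dU !scaleRE.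
have hid : (u : R) @[u --> 0^'+] --> (0 : R).
  apply: cvg_at_right_filter.
  exact: cvg_id.
have hsl : (T - u) @[u --> 0^'+] --> T - 0.
  exact: (rcvgB (rcvgC T) hid).
have cphi (i : 'I_n) : phi i u @[u --> 0^'+] --> phi i 0.
  have a1 := rcvgM hsl (cW i).
  have a2 := rcvgD (cZ i) a1.
  have a3 := rcvgM a2 a2.
  have b1 := rcvgM hsl hsl.
  have b2 := rcvgM hsl b1.
  have b3 := rcvgM hsl b2.
  have b4 := rcvgM (cW i) (cW i).
  have b5 := rcvgM b3 b4.
  have b6 := rcvgM (rcvgC mu) b5.
  exact: (rcvgD a3 b6).
have cPhi : (\sum_i phi i u) @[u --> 0^'+] --> \sum_i phi i 0.
  exact: cvg_sum_ord cphi.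
have cE : E u @[u --> 0^'+] --> E 0.
  have b1 := rcvgM hsl hsl.
  have b2 := rcvgB (rcvgC (T ^+ 2)) b1.
  have b3 := rcvgM (rcvgC ka) b2.
  exact: (rcvgD (rcvgC 1) b3).
have cU : U u @[u --> 0^'+] --> U 0.
  have b1 := rcvgM hsl hsl.
  have b2 := rcvgB (rcvgC (T ^+ 2)) b1.
  have b3 := rcvgM (rcvgC c) b2.
  have b4 := rcvgM cE cPhi.
  exact: (rcvgB b4 b3).
have cont : {within `[0, T], continuous U}.
  apply/(continuous_within_itvP _ T0); split.
  - move=> x; rewrite in_itv /= => /andP[x0 _].
    apply: differentiable_continuous; apply/derivable1_diffP.
    exact: (@ex_derive _ _ _ _ _ _ _ (dUt x x0)).
  - exact: cU.
  - apply: cvg_at_left_filter.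
    apply: differentiable_continuous; apply/derivable1_diffP.
    exact: (@ex_derive _ _ _ _ _ _ _ (dUt T T0)).
have dU' : forall x, x \in `]0, T[ -> is_derive x 1 U (dU x).
  by move=> x; rewrite in_itv /= => /andP[x0 _]; exact: dUt.
have [x0 x0in hmvt] := MVT T0 dU' cont.
move: x0in; rewrite in_itv /= => /andP[x00 x0T].
have key : dU x0 <= 0.
  have s0 : 0 < T - x0 by lra.
  set s := T - x0 in s0.
  have SD : \sum_i Dphi i x0 = 2 * s * (\sum_i Z i x0 * F x0 i + (s + mu * s ^+ 3) * \sum_i W i x0 * F x0 i
      - 2 * mu * s ^+ 2 * \sum_i W i x0 ^+ 2).
    rewrite (_ : \sum_i Dphi i x0 = \sum_i (2 * s * (Z i x0 * F x0 i) + 2 * s * (s + mu * s ^+ 3) * (W i x0 * F x0 i)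
       - 2 * s * (2 * mu * s ^+ 2) * (W i x0 ^+ 2))).
      by rewrite sum3; ring.
    by apply: eq_bigr => i _; rewrite /Dphi -/s; ring.
  have SP : \sum_i phi i x0 = \sum_i Z i x0 ^+ 2 + 2 * s * \sum_i Z i x0 * W i x0
      + s ^+ 2 * \sum_i W i x0 ^+ 2 + mu * s ^+ 4 * \sum_i W i x0 ^+ 2.
    rewrite (_ : \sum_i phi i x0 = \sum_i (Z i x0 ^+ 2 + 2 * s * (Z i x0 * W i x0)
      + s ^+ 2 * W i x0 ^+ 2 + mu * s ^+ 4 * W i x0 ^+ 2)).
      by rewrite sum4.
    by apply: eq_bigr => i _; rewrite /phi -/s; ring.
  have hb := hbr x0 x00 x0T; rewrite -/s in hb.
  rewrite -SP in hb.
  set X := (X in X + ka * _ <= B) in hb.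
  rewrite /dU -/s SD -/X.
  set P := \sum_i phi i x0 in hb *.
  have P0 : 0 <= P.
    apply: sumr_ge0 => i _; rewrite /phi; apply: addr_ge0; first exact: sqr_ge0.
    apply: mulr_ge0 => //; apply: mulr_ge0; [apply: exprn_ge0; lra| exact: sqr_ge0].
  have sT : s <= T by rewrite /s; lra.
  have ss : s ^+ 2 <= T ^+ 2.
    by rewrite ler_pXn2r ?nnegrE //; lra.
  have E1 : 1 <= E x0.
    rewrite /E -/s; have : 0 <= ka * (T ^+ 2 - s ^+ 2) by apply: mulr_ge0 => //; lra.
    lra.
  have E2 : E x0 <= 1 + ka * T ^+ 2.
    rewrite /E -/s; have : 0 <= ka * s ^+ 2 by apply: mulr_ge0 => //; exact: sqr_ge0.
    lra.
  have h1 : E x0 * X <= E x0 * (B - ka * P) by apply: ler_wpM2l; lra.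
  have h2 : (E x0 - (1 + ka * T ^+ 2)) * B <= 0 by apply: mulr_le0_ge0; lra.
  have h3 : (ka * P) * (1 - E x0) <= 0 by apply: mulr_ge0_le0; [exact: mulr_ge0| lra].
  have h4 : E x0 * X + ka * P - c <= 0.
    rewrite /c; have e : E x0 * (B - ka * P) = E x0 * B - E x0 * (ka * P) by ring.
    rewrite e in h1.
    have e2 : (ka * P) * (1 - E x0) = ka * P - E x0 * (ka * P) by ring.
    have e3 : (E x0 - (1 + ka * T ^+ 2)) * B = E x0 * B - (1 + ka * T ^+ 2) * B by ring.
    lra.
  have -> : E x0 * (2 * s * X) + P * (ka * (2 * s)) - c * (2 * s) = (2 * s) * (E x0 * X + ka * P - c) by ring.
  apply: mulr_ge0_le0 => //; lra.
have UTU0 : U T <= U 0.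
  rewrite -subr_le0 hmvt; apply: mulr_le0_ge0 => //; lra.
have eUT : U T = (1 + ka * T ^+ 2) * \sum_i Z i T ^+ 2 - c * T ^+ 2.
  rewrite /U /E subrr expr0n /= subr0; congr (_ * _ - _).
  by apply: eq_bigr => i _; rewrite /phi subrr expr0n /= mul0r addr0 mul0r mulr0 addr0.
have eU0 : U 0 = \sum_i Z i 0 ^+ 2.
  rewrite /U /E subr0 subrr mulr0 addr0 mul1r mulr0 subr0.
  by apply: eq_bigr => i _; rewrite /phi W0 mulr0 addr0 expr0n /= mulr0 mulr0 addr0.
move: UTU0; rewrite eUT eU0 /c; lra.
Qed.
End ODE.

Section VecLemmas.
Variables (R : realType) (d : nat).
Notation vec := (d.-tuple R).

Lemma sum_quad (u v : 'I_d -> R) (t : R) :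
  \sum_i (u i - t * v i) ^+ 2 =
  \sum_i u i ^+ 2 - 2 * t * \sum_i (u i * v i) + t ^+ 2 * \sum_i v i ^+ 2.
Proof.
rewrite !mulr_sumr -sumrB -big_split /=; apply: eq_bigr => i _; ring.
Qed.

Lemma vdot_ge0 (x : vec) : 0 <= vdot x x.
Proof. by apply: sumr_ge0 => i _; rewrite -expr2 sqr_ge0. Qed.

Lemma vnorm_ge0 (x : vec) : 0 <= vnorm x.
Proof. exact: sqrtr_ge0. Qed.

Lemma vnorm_sq (x : vec) : vnorm x ^+ 2 = vdot x x.
Proof. by rewrite /vnorm sqr_sqrtr // vdot_ge0. Qed.

Lemma vdotC (x y : vec) : vdot x y = vdot y x.
Proof. by apply: eq_bigr => i _; rewrite mulrC. Qed.

Lemma CS_sq (x y : vec) : vdot x y ^+ 2 <= vdot x x * vdot y y.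
Proof.
set a := vdot x x; set b := vdot y y; set c := vdot x y.
have key t : 0 <= a - 2 * t * c + t ^+ 2 * b.
  have := sum_quad (fun i => tnth x i) (fun i => tnth y i) t.
  rewrite /a /b /c /vdot.
  have -> : \sum_i tnth x i ^+ 2 = \sum_i tnth x i * tnth x i by apply: eq_bigr => i _; rewrite expr2.
  have -> : \sum_i tnth y i ^+ 2 = \sum_i tnth y i * tnth y i by apply: eq_bigr => i _; rewrite expr2.
  move=> <-; apply: sumr_ge0 => i _; exact: sqr_ge0.
have a0 : 0 <= a by exact: vdot_ge0.
have b0 : 0 <= b by exact: vdot_ge0.
have [b00|bpos] := eqVneq b 0.
  have [c0|cn0] := eqVneq c 0; first by rewrite c0 expr0n /=; apply: mulr_ge0.
  exfalso.
  have := key ((a + 1) / (2 * c)); rewrite b00 mulr0 addr0.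
  have -> : 2 * ((a + 1) / (2 * c)) * c = a + 1 by field; rewrite cn0.
  lra.
have bp : 0 < b by rewrite lt0r bpos.
have := key (c / b).
have -> : a - 2 * (c / b) * c + (c / b) ^+ 2 * b = (a * b - c ^+ 2) / b.
  by field; rewrite bpos.
rewrite pmulr_lge0 ?invr_gt0 //; lra.
Qed.

Lemma CS (x y : vec) : vdot x y <= vnorm x * vnorm y.
Proof.
have [c0|c0] := lerP (vdot x y) 0.
  by apply: (le_trans c0); apply: mulr_ge0; exact: vnorm_ge0.
rewrite /vnorm -sqrtrM ?vdot_ge0 //.
rewrite -(ger0_norm (ltW c0)) -sqrtr_sqr.
by rewrite ler_sqrt ?CS_sq // mulr_ge0 // vdot_ge0.
Qed.

Lemma vnorm_eq0_vdot (x : vec) : vnorm x = 0 -> vdot x x = 0.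
Proof. by move=> h; rewrite -vnorm_sq h expr0n. Qed.

End VecLemmas.

Section Meas.
Variables (R : realType) (d : nat).
Notation vec := (d.-tuple R).
Local Open Scope ereal_scope.

Lemma coupling_push1 (k : probability (vec * vec)%type R) (mu1 mu2 : probability vec R) :
  is_coupling k mu1 mu2 -> forall A, measurable A -> A `<=` setT ->
  mu1 A = pushforward k fst A.
Proof.
move=> cpl A mA _; rewrite /pushforward.
have -> : (fst @^-1` A : set (vec * vec)) = A `*` [set: vec].
  by apply/seteqP; split => [[x y]|[x y]] //= [].
by rewrite (cpl A mA).1.
Qed.

Lemma coupling_push2 (k : probability (vec * vec)%type R) (mu1 mu2 : probability vec R) :
  is_coupling k mu1 mu2 -> forall A, measurable A -> A `<=` setT ->
  mu2 A = pushforward k snd A.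
Proof.
move=> cpl A mA _; rewrite /pushforward.
have -> : (snd @^-1` A : set (vec * vec)) = [set: vec] `*` A.
  by apply/seteqP; split => [[x y]|[x y]] //= [].
by rewrite (cpl A mA).2.
Qed.

Lemma transfer (k : probability (vec * vec)%type R) (mu : probability vec R)
  (phi : vec * vec -> vec) (mphi : measurable_fun setT phi) (g : vec -> R) :
  (forall A, measurable A -> A `<=` setT -> mu A = pushforward k phi A) ->
  mu.-integrable setT (EFin \o g) ->
  k.-integrable setT (EFin \o (g \o phi)) /\
  (\int[mu]_(x in setT) g x)%R = (\int[k]_(x in setT) (g \o phi) x)%R.
Proof.
move=> hmu intg.
have mg : measurable_fun [set: vec] (EFin \o g) by case/integrableP: intg.
have intk : k.-integrable setT (EFin \o (g \o phi)).
  apply/integrableP; split.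
    exact: (measurableT_comp mg mphi).
  case/integrableP: intg => _ ifin.
  rewrite (_ : \int[k]_(x in setT) `|(EFin \o (g \o phi)) x| =
     \int[pushforward k phi]_(y in setT) `|(EFin \o g) y|).
    by rewrite -(eq_measure_integral _ hmu).
  rewrite ge0_integral_pushforward //=.
  apply/measurable_EFinP; apply: measurableT_comp => //; exact/measurable_EFinP.
split => //.
rewrite /Rintegral; congr fine.
rewrite (eq_measure_integral _ hmu) integral_pushforward //.
Qed.


Lemma Rintegral_sum_ord (d' : measure_display) (T : measurableType d') (k : {measure set T -> \bar R})
  (n : nat) (f : 'I_n -> T -> R) :
  (forall i, k.-integrable setT (EFin \o f i)) ->
  (\int[k]_(x in setT) (\sum_i f i x))%R = (\sum_i \int[k]_(x in setT) f i x)%R.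
Proof.
move=> hf.
rewrite /index_enum; elim: (Finite.enum _) => [|j s ih].
  rewrite big_nil.
  under eq_Rintegral do rewrite big_nil.
  by rewrite Rintegral_cst //= mul0r.
rewrite big_cons.
under eq_Rintegral do rewrite big_cons.
rewrite RintegralD //; first by rewrite ih.
have -> : EFin \o (fun x => (\sum_(i <- s) f i x)%R) = (fun x => \sum_(i <- s) (EFin \o f i) x).
  by apply/funext => x /=; rewrite sumEFin.
exact: integrable_sum.
Qed.


Lemma tnth_vsub (x y : vec) i : tnth (vsub x y) i = (tnth x i - tnth y i)%R.
Proof. by rewrite /vsub tnth_mktuple. Qed.

Lemma int_bound (k : probability (vec * vec)%type R) (mu1 mu2 : probability vec R)
  (G1 : vec -> vec -> vec) (q q' : vec) (h : vec * vec -> R) :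
  is_coupling k mu1 mu2 ->
  (forall i, mu1.-integrable setT (fun u => (tnth (G1 q u) i)%:E)) ->
  (forall i, mu2.-integrable setT (fun u => (tnth (G1 q' u) i)%:E)) ->
  k.-integrable setT (EFin \o h) ->
  (forall p, vnorm (vsub (G1 q p.1) (G1 q' p.2)) <= h p)%R ->
  (vnorm (vsub (interaction G1 mu1 q) (interaction G1 mu2 q')) <= \int[k]_(x in setT) h x)%R.
Proof.
move=> cpl int1 int2 inth hb.
set e := vsub _ _.
pose F i (p : vec * vec) := (tnth (G1 q p.1) i - tnth (G1 q' p.2) i)%R.
have tr1 i := transfer (g := fun u => tnth (G1 q u) i) measurable_fst (coupling_push1 cpl) (int1 i).
have tr2 i := transfer (g := fun u => tnth (G1 q' u) i) measurable_snd (coupling_push2 cpl) (int2 i).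
have intF i : k.-integrable setT (EFin \o F i).
  have := integrableB measurableT (tr1 i).1 (tr2 i).1.
  apply: eq_integrable => // p _ /=; by rewrite EFinB.
have ei i : tnth e i = (\int[k]_(x in setT) F i x)%R.
  rewrite /e tnth_vsub /interaction !tnth_mktuple (tr1 i).2 (tr2 i).2.
  by rewrite -RintegralB //; [exact: (tr1 i).1 | exact: (tr2 i).1].
have intZ (c : R) i : k.-integrable setT (EFin \o (fun p => c * F i p)%R).
  have := integrableZl measurableT c (intF i).
  by apply: eq_integrable => // p _ /=; rewrite EFinM.
have inth' : k.-integrable setT (EFin \o (fun p => vnorm e * h p)%R).
  have := integrableZl measurableT (vnorm e) inth.
  by apply: eq_integrable => // p _ /=; rewrite EFinM.
have key : (vdot e e <= vnorm e * \int[k]_(x in setT) h x)%R.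
  have -> : vdot e e = (\sum_i \int[k]_(x in setT) (tnth e i * F i x))%R.
    rewrite /vdot; apply: eq_bigr => i _.
    by rewrite RintegralZl // -ei.
  rewrite -Rintegral_sum_ord //.
  rewrite -RintegralZl //.
  apply: le_Rintegral => //.
  - have -> : EFin \o (fun x => \sum_i tnth e i * F i x)%R =
        (fun x => \sum_i (EFin \o (fun p => tnth e i * F i p)%R) x).
      by apply/funext => x /=; rewrite sumEFin.
    apply: integrable_sum => // i _; exact: intZ.
  - move=> p _.
    have -> : (\sum_i tnth e i * F i p)%R = vdot e (vsub (G1 q p.1) (G1 q' p.2)).
      by rewrite /vdot; apply: eq_bigr => i _; rewrite tnth_vsub.
    apply: (le_trans (CS _ _)).
    by apply: ler_wpM2l; [exact: vnorm_ge0| exact: hb].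
have h0 : (0 <= \int[k]_(x in setT) h x)%R.
  apply: Rintegral_ge0 => p _; apply: le_trans (hb p); exact: vnorm_ge0.
have [e0|epos] := eqVneq (vnorm e) 0%R; first by rewrite e0.
have ep : (0 < vnorm e)%R by rewrite lt0r epos vnorm_ge0.
rewrite -vnorm_sq expr2 in key.
by rewrite -(ler_pM2l ep).
Qed.


Lemma measurable_vnorm_diff : measurable_fun [set: vec * vec] (fun p : vec * vec => vnorm (vsub p.1 p.2)).
Proof.
rewrite /vnorm /vdot.
apply: (measurableT_comp (continuous_measurable_fun (@sqrt_continuous R))).
apply: measurable_sum => i.
have mi : measurable_fun [set: vec * vec] (fun p : vec * vec => tnth (vsub p.1 p.2) i).
  under eq_fun do rewrite tnth_vsub.
  apply: measurable_funB.
  - exact: (measurableT_comp (measurable_tnth i) measurable_fst).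
  - exact: (measurableT_comp (measurable_tnth i) measurable_snd).
exact: measurable_funM.
Qed.

Lemma e_bound (k : probability (vec * vec)%type R) (mu1 mu2 : probability vec R)
  (G1 : vec -> vec -> vec) (q q' : vec) (Lt Mr : R) :
  is_coupling k mu1 mu2 ->
  (forall i, mu1.-integrable setT (fun u => (tnth (G1 q u) i)%:E)) ->
  (forall i, mu2.-integrable setT (fun u => (tnth (G1 q' u) i)%:E)) ->
  (0 <= Lt)%R ->
  (forall x y x' y', vnorm (vsub (G1 x y) (G1 x' y')) <= Lt * (vnorm (vsub x x') + vnorm (vsub y y')))%R ->
  \int[k]_p (vnorm (vsub p.1 p.2))%:E <= Mr%:E ->
  (vnorm (vsub (interaction G1 mu1 q) (interaction G1 mu2 q')) <= Lt * (vnorm (vsub q q') + Mr))%R.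
Proof.
move=> cpl int1 int2 Lt0 hd hM.
have mv := measurable_vnorm_diff.
have intv : k.-integrable setT (EFin \o (fun p : vec * vec => vnorm (vsub p.1 p.2))).
  apply/integrableP; split; first exact/measurable_EFinP.
  apply: (le_lt_trans _ (le_lt_trans hM (ltry Mr))).
  rewrite le_eqVlt; apply/orP; left; apply/eqP; apply: eq_integral => p _ /=.
  by rewrite ger0_norm // vnorm_ge0.
pose h (p : vec * vec) := (Lt * vnorm (vsub q q') + Lt * vnorm (vsub p.1 p.2))%R.
have inth : k.-integrable setT (EFin \o h).
  have i1 : k.-integrable setT (EFin \o (fun _ : vec * vec => Lt * vnorm (vsub q q'))%R).
    exact: (@finite_measure_integrable_cst _ _ _ k _ _ measurableT).
  have i2 := integrableZl measurableT Lt intv.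
  have := integrableD measurableT i1 i2.
  by apply: eq_integrable => // p _ /=; rewrite EFinD EFinM.
have := int_bound cpl int1 int2 inth.
have hb : forall p : vec * vec, (vnorm (vsub (G1 q p.1) (G1 q' p.2)) <= h p)%R.
  by move=> p; rewrite /h -mulrDr; exact: hd.
move=> /(_ hb) H; apply: (le_trans H).
rewrite /h RintegralD //; last first.
  have := integrableZl measurableT Lt intv.
  by apply: eq_integrable => // p _ /=; rewrite EFinM.
  exact: (@finite_measure_integrable_cst _ _ _ k _ _ measurableT).
rewrite Rintegral_cst //.
have -> : fine (k [set: vec * vec]) = 1%R by rewrite probability_setT.
rewrite mulr1 RintegralZl //.
rewrite mulrDr lerD2l; apply: ler_wpM2l => //.
have vfin : \int[k]_p (vnorm (vsub p.1 p.2))%:E \is a fin_num.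
  by apply: integrable_fin_num.
rewrite /Rintegral -lee_fin fineK //.
Qed.

End Meas.

Section MainH.
Variables (R : realType) (d : nat).
Notation vec := (d.-tuple R).

Lemma CSabs (x y : vec) : `|vdot x y| <= vnorm x * vnorm y.
Proof.
rewrite /vnorm -sqrtrM ?vdot_ge0 // -sqrtr_sqr.
by rewrite ler_sqrt ?CS_sq // mulr_ge0 // vdot_ge0.
Qed.

Lemma grad_bound (gradV : vec -> vec) (L K Rc : R) (x y : vec) :
  0 < L -> 0 < K ->
  (forall x y, vnorm (vsub (gradV x) (gradV y)) <= L * vnorm (vsub x y)) ->
  (forall x y, Rc <= vnorm (vsub x y) ->
     K * vnorm (vsub x y) ^+ 2 + L^-1 * vnorm (vsub (gradV x) (gradV y)) ^+ 2
       <= vdot (vsub x y) (vsub (gradV x) (gradV y))) ->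
  - vdot (vsub x y) (vsub (gradV x) (gradV y)) <=
    - K * vnorm (vsub x y) ^+ 2 - vnorm (vsub (gradV x) (gradV y)) ^+ 2 / L + (2 * L + K) * Rc ^+ 2.
Proof.
move=> L0 K0 hb hc.
have nz0 := vnorm_ge0 (vsub x y).
have ng0 := vnorm_ge0 (vsub (gradV x) (gradV y)).
have hcs := CSabs (vsub x y) (vsub (gradV x) (gradV y)).
move: (hb x y) (hc x y) nz0 ng0 hcs.
set nz := vnorm (vsub x y); set ng := vnorm _; set a := vdot _ _.
move=> hb' hc' nz0 ng0 hcs.
have R2 : 0 <= (2 * L + K) * Rc ^+ 2 by apply: mulr_ge0; [lra| exact: sqr_ge0].
have [Rnz|nzR] := lerP Rc nz.
  have := hc' Rnz; rewrite (mulrC L^-1).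
  move: R2; clear; lra.
have na : - a <= nz * ng by apply: le_trans hcs; rewrite -normrN ler_norm.
have h1 : nz * ng <= nz * (L * nz) by apply: ler_wpM2l.
have h2 : ng ^+ 2 <= (L * nz) ^+ 2 by rewrite ler_pXn2r // ?nnegrE // mulr_ge0 // ltW.
have h3 : ng ^+ 2 / L <= L * nz ^+ 2.
  rewrite ler_pdivrMr // (le_trans h2) //; rewrite le_eqVlt; apply/orP; left; apply/eqP; ring.
have h4 : nz ^+ 2 <= Rc ^+ 2 by rewrite ler_pXn2r // ?nnegrE //; [exact: ltW| apply: le_trans nz0 (ltW nzR)].
have h5 : (2 * L + K) * nz ^+ 2 <= (2 * L + K) * Rc ^+ 2 by apply: ler_wpM2l => //; lra.
have e : nz * (L * nz) = L * nz ^+ 2 by ring.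
rewrite e in h1.
have e2 : (2 * L + K) * nz ^+ 2 = 2 * (L * nz ^+ 2) + K * nz ^+ 2 by ring.
rewrite e2 in h5.
move: na h1 h3 h5; clear; lra.
Qed.

Lemma KL4 (gradV : vec -> vec) (L K Rc : R) :
  0 < L -> 0 < K -> 0 <= Rc -> (0 < d)%N ->
  (forall x y, Rc <= vnorm (vsub x y) ->
     K * vnorm (vsub x y) ^+ 2 + L^-1 * vnorm (vsub (gradV x) (gradV y)) ^+ 2
       <= vdot (vsub x y) (vsub (gradV x) (gradV y))) ->
  K <= L / 4.
Proof.
move=> L0 K0 Rc0 dpos hc.
pose y0 : vec := [tuple (Rc + 1) | i < d].
pose i0 : 'I_d := Ordinal dpos.
have hn : Rc + 1 <= vnorm (vsub y0 vzero).
  rewrite /vnorm -[X in X <= _]ger0_norm ?addr_ge0 // -sqrtr_sqr ler_sqrt ?vdot_ge0 //.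
  rewrite /vdot (bigD1 i0) //= !tnth_vsub /y0 /vzero !tnth_mktuple subr0 expr2 lerDl.
  by apply: sumr_ge0 => i _; rewrite -expr2 sqr_ge0.
have hR : Rc <= vnorm (vsub y0 vzero) by apply: le_trans hn; lra.
have := hc _ _ hR.
have hcs := CSabs (vsub y0 vzero) (vsub (gradV y0) (gradV vzero)).
set nz := vnorm (vsub y0 vzero) in hn hR hcs *.
set ng := vnorm (vsub (gradV y0) (gradV vzero)) in hcs *.
set a := vdot _ _ in hcs *.
have nzp : 0 < nz by apply: lt_le_trans hn; lra.
have ng0 : 0 <= ng by exact: vnorm_ge0.
move=> H.
have ha : a <= nz * ng by apply: le_trans hcs; exact: ler_norm.
have sq : nz * ng - L^-1 * ng ^+ 2 <= L / 4 * nz ^+ 2.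
  have : 0 <= L^-1 * (ng - L / 2 * nz) ^+ 2 by apply: mulr_ge0; [rewrite invr_ge0 ltW | exact: sqr_ge0].
  have -> : L^-1 * (ng - L / 2 * nz) ^+ 2 = L^-1 * ng ^+ 2 - nz * ng + L / 4 * nz ^+ 2.
    by field; lra.
  lra.
have : K * nz ^+ 2 <= L / 4 * nz ^+ 2 by move: H ha sq; clear; lra.
by rewrite ler_pM2r // exprn_gt0.
Qed.

Lemma final_real (A A0 ka K T Bt : R) : 0 < K -> 0 < T -> K * T ^+ 2 <= 1 / 16 -> ka = 11 / 25 * K ->
  0 <= A0 ->
  (1 + ka * T ^+ 2) * A <= A0 + (1 + ka * T ^+ 2) * Bt ->
  A <= (1 - 5 / 12 * K * T ^+ 2) * A0 + Bt.
Proof.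
move=> K0 T0 hk -> A00 H.
have kT : 0 < K * T ^+ 2 by rewrite mulr_gt0 // exprn_gt0.
have E0 : 0 < 1 + 11 / 25 * K * T ^+ 2 by lra.
have H' : A <= A0 / (1 + 11 / 25 * K * T ^+ 2) + Bt.
  rewrite -(ler_pM2l E0).
  have -> : (1 + 11 / 25 * K * T ^+ 2) * (A0 / (1 + 11 / 25 * K * T ^+ 2) + Bt) =
    A0 + (1 + 11 / 25 * K * T ^+ 2) * Bt by field; lra.
  exact: H.
apply: le_trans H' _; rewrite lerD2r.
rewrite ler_pdivrMr //.
have : 0 <= A0 * (K * T ^+ 2) * (7 / 300 - 55 / 300 * (K * T ^+ 2)).
  apply: mulr_ge0; first by apply: mulr_ge0 => //; exact: ltW.
  lra.
have -> : (1 - 5 / 12 * K * T ^+ 2) * A0 * (1 + 11 / 25 * K * T ^+ 2) =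
   A0 + A0 * (K * T ^+ 2) * (7 / 300 - 55 / 300 * (K * T ^+ 2)) by field.
lra.
Qed.


Lemma ereal_sq_ge0 (x : \bar R) : (0 <= x * x)%E.
Proof. by case: x => [r||] //=; rewrite lee_fin -expr2 sqr_ge0. Qed.

End MainH.

Unset Implicit Arguments.

Theorem mainTheorem7 (R : realType) (d : nat)
  (V : d.-tuple R -> R) (gradV : d.-tuple R -> d.-tuple R)
  (W : d.-tuple R -> d.-tuple R -> R) (G1 : d.-tuple R -> d.-tuple R -> d.-tuple R)
  (L K Rc Lt : R)
  (hL : 0 < L) (hK : 0 < K) (hRc : 0 <= Rc) (hLt : 0 <= Lt)
  (hgradV : is_gradient V gradV) (hG1 : is_gradient1 W G1)
  (ha0 : V vzero = 0) (ha1 : forall x, 0 <= V x)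
  (hb : forall x y, vnorm (vsub (gradV x) (gradV y)) <= L * vnorm (vsub x y))
  (hc : forall x y, Rc <= vnorm (vsub x y) ->
     K * vnorm (vsub x y) ^+ 2 + L^-1 * vnorm (vsub (gradV x) (gradV y)) ^+ 2
       <= vdot (vsub x y) (vsub (gradV x) (gradV y)))
  (hWsym : forall x y, W x y = W y x)
  (hd : forall x y x' y', vnorm (vsub (G1 x y) (G1 x' y'))
                            <= Lt * (vnorm (vsub x x') + vnorm (vsub y y')))
  (T eps : R) (hT : 0 < T) (heps : 0 <= eps)
  (hT2 : (L + 2 * eps * Lt) * T ^+ 2 <= 1 / 4) (hepsK : eps * Lt <= K / 3)
  (gamma : probability (d.-tuple R) R) (hgamma : std_gaussian gamma)
  (mu mu' : probability (d.-tuple R) R)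
  (Qf Pf Qf' Pf' : d.-tuple R -> d.-tuple R -> R -> d.-tuple R)
  (mut mut' : R -> probability (d.-tuple R) R)
  (hflow : dd_hamiltonian gradV G1 eps gamma mu Qf Pf mut)
  (hflow' : dd_hamiltonian gradV G1 eps gamma mu' Qf' Pf' mut')
  (x x' v v' : d.-tuple R) (hv : v = v')
  (kappa : R -> probability (d.-tuple R * d.-tuple R)%type R)
  (hkappa : forall s : R, 0 <= s <= T -> is_coupling (kappa s) (mut s) (mut' s)) :
  (((vnorm (vsub (Qf x v T) (Qf' x' v' T))) ^+ 2)%:E <=
    ((1 - 5 / 12 * K * T ^+ 2) * vnorm (vsub x x') ^+ 2)%:E
    + (eps ^+ 2 * Lt ^+ 2 * T ^+ 4 * (7 / 6 + 3 / (2 * K * T ^+ 2)))%:E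
        * (sup_coupling_cost kappa T * sup_coupling_cost kappa T)
    + ((2 * L + K) * Rc ^+ 2 * T ^+ 2)%:E)%E.

Proof.
move: hflow hflow' => [hsol hlaw] [hsol' hlaw'].
have [d0|dpos] := posnP d.
  have vn0 : forall y : d.-tuple R, vnorm y = 0.
    move=> y; rewrite /vnorm /vdot big1 ?sqrtr0 // => i.
    by move: (ltn_ord i); rewrite {2}d0.
  rewrite !vn0 expr0n /= mulr0.
  apply: adde_ge0; last by rewrite lee_fin; apply: mulr_ge0; [apply: mulr_ge0; [lra| exact: sqr_ge0]| exact: sqr_ge0].
  apply: adde_ge0 => //; apply: mule_ge0; last exact: ereal_sq_ge0.
  rewrite lee_fin; apply: mulr_ge0.
    by apply: mulr_ge0; [apply: mulr_ge0; exact: sqr_ge0| apply: exprn_ge0; exact: ltW].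
  apply: addr_ge0 => //; apply: divr_ge0 => //; apply: mulr_ge0; [lra| apply: exprn_ge0; exact: ltW].
have KL := KL4 hL hK hRc dpos hc.
have be0 : 0 <= eps * Lt by apply: mulr_ge0.
have T2 : 0 < T ^+ 2 by rewrite exprn_gt0.
have [hQ0 [hP0 [cQ [cP [hint hder]]]]] := hsol x v.
have [hQ0' [hP0' [cQ' [cP' [hint' hder']]]]] := hsol' x' v'.
pose Zv i t := tnth (Qf x v t) i - tnth (Qf' x' v' t) i.
pose Wv i t := tnth (Pf x v t) i - tnth (Pf' x' v' t) i.
pose Fv t i := (- tnth (gradV (Qf x v t)) i - eps * tnth (interaction G1 (mut t) (Qf x v t)) i)
  - (- tnth (gradV (Qf' x' v' t)) i - eps * tnth (interaction G1 (mut' t) (Qf' x' v' t)) i).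
have core_real : forall Mr : R, 0 <= Mr ->
   (forall t, 0 < t -> t < T -> eps * vnorm (vsub (interaction G1 (mut t) (Qf x v t))
        (interaction G1 (mut' t) (Qf' x' v' t))) <= eps * Lt * (vnorm (vsub (Qf x v t) (Qf' x' v' t)) + Mr)) ->
   vnorm (vsub (Qf x v T) (Qf' x' v' T)) ^+ 2 <= (1 - 5 / 12 * K * T ^+ 2) * vnorm (vsub x x') ^+ 2
     + (eps ^+ 2 * Lt ^+ 2 * T ^+ 4 * (7 / 6 + 3 / (2 * K * T ^+ 2))) * Mr ^+ 2
     + (2 * L + K) * Rc ^+ 2 * T ^+ 2.
  move=> Mr Mr0 hE.
  pose B := (2 * L + K) * Rc ^+ 2 + (eps * Lt) ^+ 2 * Mr ^+ 2 * (7 * T ^+ 2 / 6 + 3 / (2 * K)).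
  have B0 : 0 <= B.
    apply: addr_ge0; first by apply: mulr_ge0; [lra| exact: sqr_ge0].
    apply: mulr_ge0; first by apply: mulr_ge0; exact: sqr_ge0.
    apply: addr_ge0; first by apply: divr_ge0 => //; apply: mulr_ge0 => //; exact: ltW.
    by apply: divr_ge0 => //; lra.
  have ka0 : 0 <= 11 / 25 * K by apply: mulr_ge0 => //; exact: ltW.
  have mu0 : 0 <= 2 / T ^+ 2 by apply: divr_ge0 => //; exact: ltW.
  have hZd : forall (i : 'I_d) (t : R), 0 < t -> is_derive t 1 (Zv i) (Wv i t).
    move=> i t t0.
    exact: (is_deriveB (hder t t0 i).1 (hder' t t0 i).1).
  have hWd : forall (i : 'I_d) (t : R), 0 < t -> is_derive t 1 (Wv i) (Fv t i).
    move=> i t t0.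
    exact: (is_deriveB (hder t t0 i).2 (hder' t t0 i).2).
  have cZ : forall i : 'I_d, Zv i t @[t --> 0^'+] --> Zv i 0.
    by move=> i; rewrite /Zv hQ0 hQ0'; exact: (rcvgB (cQ i) (cQ' i)).
  have cW : forall i : 'I_d, Wv i t @[t --> 0^'+] --> Wv i 0.
    by move=> i; rewrite /Wv hP0 hP0'; exact: (rcvgB (cP i) (cP' i)).
  have W0 : forall i : 'I_d, Wv i 0 = 0.
    by move=> i; rewrite /Wv hP0 hP0' hv subrr.
  have hbr : forall t : R, 0 < t -> t < T ->
     \sum_i Zv i t * Fv t i + ((T - t) + 2 / T ^+ 2 * (T - t) ^+ 3) * \sum_i Wv i t * Fv t i
     - 2 * (2 / T ^+ 2) * (T - t) ^+ 2 * \sum_i Wv i t ^+ 2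
     + 11 / 25 * K * (\sum_i Zv i t ^+ 2 + 2 * (T - t) * \sum_i Zv i t * Wv i t
             + (T - t) ^+ 2 * \sum_i Wv i t ^+ 2 + 2 / T ^+ 2 * (T - t) ^+ 4 * \sum_i Wv i t ^+ 2) <= B.
    move=> t t0 tT.
    set z := vsub (Qf x v t) (Qf' x' v' t).
    set w := vsub (Pf x v t) (Pf' x' v' t).
    set g := vsub (gradV (Qf x v t)) (gradV (Qf' x' v' t)).
    set e := vsub (interaction G1 (mut t) (Qf x v t)) (interaction G1 (mut' t) (Qf' x' v' t)).
    have eZF : \sum_i Zv i t * Fv t i = - vdot z g - eps * vdot z e.
      rewrite /vdot mulr_sumr -sumrN -sumrB; apply: eq_bigr => i _.
      rewrite /Zv /Fv !tnth_vsub; ring.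
    have eWF : \sum_i Wv i t * Fv t i = - vdot w g - eps * vdot w e.
      rewrite /vdot mulr_sumr -sumrN -sumrB; apply: eq_bigr => i _.
      rewrite /Wv /Fv !tnth_vsub; ring.
    have eZZ : \sum_i Zv i t ^+ 2 = vnorm z ^+ 2.
      by rewrite vnorm_sq /vdot; apply: eq_bigr => i _; rewrite /Zv tnth_vsub expr2.
    have eWW : \sum_i Wv i t ^+ 2 = vnorm w ^+ 2.
      by rewrite vnorm_sq /vdot; apply: eq_bigr => i _; rewrite /Wv tnth_vsub expr2.
    have eZW : \sum_i Zv i t * Wv i t = vdot z w.
      by rewrite /vdot; apply: eq_bigr => i _; rewrite /Zv /Wv !tnth_vsub.
    rewrite eZF eWF eZZ eWW eZW.
    have nz0 := vnorm_ge0 z; have nw0 := vnorm_ge0 w; have ng0 := vnorm_ge0 g.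
    have ne0 : 0 <= eps * vnorm e by apply: mulr_ge0 => //; exact: vnorm_ge0.
    have hb' : - vdot w g <= vnorm w * vnorm g.
      by apply: le_trans (CSabs w g); rewrite -normrN ler_norm.
    have hp' : - (eps * vdot z e) <= vnorm z * (eps * vnorm e).
      rewrite mulrCA -mulrN; apply: ler_wpM2l => //.
      by apply: le_trans (CSabs z e); rewrite -normrN ler_norm.
    have hq' : - (eps * vdot w e) <= vnorm w * (eps * vnorm e).
      rewrite mulrCA -mulrN; apply: ler_wpM2l => //.
      by apply: le_trans (CSabs w e); rewrite -normrN ler_norm.
    have hc' : vdot z w <= vnorm z * vnorm w by exact: CS.
    have hne : eps * vnorm e <= eps * Lt * (vnorm z + Mr) by exact: hE.
    have ha' := grad_bound (Qf x v t) (Qf' x' v' t) hL hK hb hc.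
    have hT2' : (L + 2 * (eps * Lt)) * T ^+ 2 <= 1 / 4 by rewrite mulrA.
    have hmu : 2 / T ^+ 2 * T ^+ 2 = 2 by rewrite mulfVK // gt_eqF.
    have s0 : 0 <= T - t by rewrite subr_ge0 ltW.
    have sT : T - t <= T by rewrite lerBlDr lerDl ltW.
    exact: (core_ineq hK hL be0 hepsK hT2' KL hT s0 sT Mr0 hmu nz0 nw0 ng0 ne0 hb' hp' hq' hc' hne ha').
  have := ode_gronwall hT ka0 mu0 B0 hZd hWd cZ cW W0 hbr.
  have eT : \sum_i Zv i T ^+ 2 = vnorm (vsub (Qf x v T) (Qf' x' v' T)) ^+ 2.
    by rewrite vnorm_sq /vdot; apply: eq_bigr => i _; rewrite /Zv tnth_vsub expr2.
  have e0 : \sum_i Zv i 0 ^+ 2 = vnorm (vsub x x') ^+ 2.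
    by rewrite vnorm_sq /vdot; apply: eq_bigr => i _; rewrite /Zv hQ0 hQ0' tnth_vsub expr2.
  rewrite eT e0 => H.
  have KT : K * T ^+ 2 <= 1 / 16.
    have LT : L * T ^+ 2 <= 1 / 4.
      apply: le_trans hT2; apply: ler_wpM2r; first exact: ltW.
      by rewrite lerDl; apply: mulr_ge0 => //; apply: mulr_ge0.
    have : K * T ^+ 2 <= L / 4 * T ^+ 2 by apply: ler_wpM2r => //; exact: ltW.
    move: LT; clear; lra.
  have := final_real hK hT KT (erefl _) (sqr_ge0 _) H.
  have -> : B * T ^+ 2 = eps ^+ 2 * Lt ^+ 2 * T ^+ 4 * (7 / 6 + 3 / (2 * K * T ^+ 2)) * Mr ^+ 2
     + (2 * L + K) * Rc ^+ 2 * T ^+ 2.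
    rewrite /B; field; rewrite ?gt_eqF //; lra.
  by rewrite addrA.
have hle : forall t, 0 <= t <= T ->
    (\int[kappa t]_z (vnorm (vsub z.1 z.2))%:E <= sup_coupling_cost kappa T)%E.
  by move=> t tin; apply: ereal_sup_ubound; exists t.
have M0 : (0 <= sup_coupling_cost kappa T)%E.
  apply: le_trans (hle 0 _); last by rewrite lexx ltW.
  by apply: integral_ge0 => p _; rewrite lee_fin vnorm_ge0.
have hcpl : forall t, 0 < t -> t < T -> is_coupling (kappa t) (mut t) (mut' t).
  by move=> t t0 tT; apply: hkappa; rewrite !ltW.
case EM : (sup_coupling_cost kappa T) => [r| |].
- have r0 : 0 <= r by rewrite EM lee_fin in M0.
  have hE : forall t, 0 < t -> t < T -> eps * vnorm (vsub (interaction G1 (mut t) (Qf x v t))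
        (interaction G1 (mut' t) (Qf' x' v' t))) <= eps * Lt * (vnorm (vsub (Qf x v t) (Qf' x' v' t)) + r).
    move=> t t0 tT.
    have hl : (\int[kappa t]_z (vnorm (vsub z.1 z.2))%:E <= r%:E)%E.
      by rewrite -EM; apply: hle; rewrite !ltW.
    have := e_bound (hcpl t t0 tT) (hint t (ltW t0)) (hint' t (ltW t0)) hLt hd hl.
    by move=> H; rewrite -mulrA; apply: ler_wpM2l.
  have := core_real r r0 hE.
  rewrite -!EFinM -!EFinD lee_fin -expr2.
  by [].
- have [bz|bp] := eqVneq (eps * Lt) 0; last first.
    have bp' : 0 < eps * Lt by rewrite lt0r bp be0.
    have cp : 0 < eps ^+ 2 * Lt ^+ 2 * T ^+ 4 * (7 / 6 + 3 / (2 * K * T ^+ 2)).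
      rewrite -exprMn; apply: mulr_gt0; first by apply: mulr_gt0; [exact: exprn_gt0 | exact: exprn_gt0].
      apply: addr_gt0 => //; apply: divr_gt0 => //; apply: mulr_gt0 => //; lra.
    rewrite mulyy muleC gt0_mulye ?lte_fin // addey // addye //.
    exact: leey.
  have c0 : eps ^+ 2 * Lt ^+ 2 * T ^+ 4 * (7 / 6 + 3 / (2 * K * T ^+ 2)) = 0.
    by rewrite -exprMn bz expr0n /= !mul0r.
  rewrite c0 mul0e adde0.
  have hE : forall t, 0 < t -> t < T -> eps * vnorm (vsub (interaction G1 (mut t) (Qf x v t))
        (interaction G1 (mut' t) (Qf' x' v' t))) <= eps * Lt * (vnorm (vsub (Qf x v t) (Qf' x' v' t)) + 0).
    move=> t t0 tT; rewrite bz mul0r.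
    move/eqP: bz; rewrite mulf_eq0 => /orP[/eqP -> | /eqP Lt0]; first by rewrite mul0r.
    apply: mulr_ge0_le0 => //.
    have inth : (kappa t).-integrable setT (EFin \o (fun _ : (d.-tuple R * d.-tuple R) => (0:R))).
      exact: (@finite_measure_integrable_cst _ _ _ (kappa t) _ _ measurableT).
    have hb0 : forall p : (d.-tuple R * d.-tuple R), vnorm (vsub (G1 (Qf x v t) p.1) (G1 (Qf' x' v' t) p.2)) <= (fun _ => 0) p.
      by move=> p /=; apply: le_trans (hd _ _ _ _) _; rewrite Lt0 mul0r.
    have := int_bound (hcpl t t0 tT) (hint t (ltW t0)) (hint' t (ltW t0)) inth hb0.
    by rewrite Rintegral_cst // mul0r.
  have := core_real 0 (lexx _) hE.
  by rewrite expr0n /= mulr0 addr0 -!EFinD lee_fin.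
- by rewrite EM in M0.
Qed.
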